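(* For any theory $\Sigma$ and any formula $A \Rightarrow B$, the following are equivalent: (1) $\Sigma \models A \Rightarrow B$; (2) $[A]_\Sigma \models A \Rightarrow B$; (3) $B \subseteq [A]_\Sigma$.
   Context: $Y$ is a non-empty finite set of attributes and $\mathcal{T}_Y = \{y^i \mid y \in Y, i \in \mathbb{Z}\}$. For $M \subseteq \mathcal{T}_Y$ and $j \in \mathbb{Z}$, $M + j = \{y^{i+j} \mid y^i \in M\}$. A formula is $A \Rightarrow B$ with $A,B$ finite subsets of $\mathcal{T}_Y$; $M \models A \Rightarrow B$ means that for every $i \in \mathbb{Z}$, $A+i \subseteq M$ implies $B+i \subseteq M$. For a theory $\Sigma$, $\mathrm{Mod}(\Sigma)$ is the set of all $M \subseteq \mathcal{T}_Y$ in which all formulas of $\Sigma$ are true; $\Sigma \models A \Rightarrow B$ means $M \models A \Rightarrow B$ for all $M \in \mathrm{Mod}(\Sigma)$; $[M]_\Sigma = \bigcap\{N \in \mathrm{Mod}(\Sigma) \mid M \subseteq N\}$. *)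

(* Defs.v *)
From mathcomp Require Import all_boot all_algebra.
Set Implicit Arguments. Unset Strict Implicit. Unset Printing Implicit Defensive.
Local Open Scope ring_scope.

(* Attribute set Y : a non-empty finite type. Terms y^i are pairs (y, i). *)
Definition term (Y : finType) := (Y * int)%type.

Definition tset (Y : finType) := term Y -> Prop.

Definition fterms (Y : finType) := seq (term Y).

Definition shift (Y : finType) (j : int) (t : term Y) : term Y := (t.1, t.2 + j).

Definition fsubset_shift (Y : finType) (A : fterms Y) (i : int) (M : tset Y) : Prop :=
  forall t, t \in A -> M (shift i t).

Record formula (Y : finType) := Formula { lhs : fterms Y; rhs : fterms Y }.

Definition holds (Y : finType) (M : tset Y) (f : formula Y) : Prop :=
  forall i : int, fsubset_shift (lhs f) i M -> fsubset_shift (rhs f) i M.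

Definition theory (Y : finType) := formula Y -> Prop.

Definition Models (Y : finType) (Sigma : theory Y) (M : tset Y) : Prop :=
  forall f, Sigma f -> holds M f.

Definition entails (Y : finType) (Sigma : theory Y) (f : formula Y) : Prop :=
  forall M, Models Sigma M -> holds M f.

Definition theory_closure (Y : finType) (Sigma : theory Y) (M : tset Y) : tset Y :=
  fun t => forall N, Models Sigma N -> (forall s, M s -> N s) -> N t.

Definition fset_of (Y : finType) (A : fterms Y) : tset Y := fun t => t \in A.

(* Main.v *)
Require Import Defs.
From mathcomp Require Import all_boot all_algebra.
Import GRing.Theory.
Local Open Scope ring_scope.

Lemma shift0 (Y : finType) (t : term Y) : shift 0 t = t.
Proof. by case: t => a b; rewrite /shift /= addr0. Qed.

Lemma shiftS (Y : finType) (i j : int) (t : term Y) : shift i (shift j t) = shift (j + i) t.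
Proof. by case: t => a b; rewrite /shift /= addrA. Qed.

Lemma closure_model (Y : finType) (Sigma : theory Y) M : Models Sigma (theory_closure Sigma M).
Proof.
move=> f Hf i HA t Ht N HN HMN.
apply: (HN f Hf i) => //.
by move=> s Hs; apply: HA.
Qed.

Lemma shift_model (Y : finType) (Sigma : theory Y) M (i : int) :
  Models Sigma M -> Models Sigma (fun t => M (shift i t)).
Proof.
move=> HM f Hf j HA t Ht.
rewrite /= shiftS; apply: (HM f Hf (j + i)) => // s Hs.
by have := HA s Hs; rewrite /= shiftS.
Qed.

Theorem theorem4 (Y : finType) (HY : (0 < #|Y|)%N) (Sigma : theory Y) (A B : fterms Y) :
  (entails Sigma (Formula A B) <-> holds (theory_closure Sigma (fset_of A)) (Formula A B)) /\
  (holds (theory_closure Sigma (fset_of A)) (Formula A B) <->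
     (forall t, t \in B -> theory_closure Sigma (fset_of A) t)).
Proof.
have h12 : entails Sigma (Formula A B) -> holds (theory_closure Sigma (fset_of A)) (Formula A B).
  by move=> H; apply: H; apply: closure_model.
have h23 : holds (theory_closure Sigma (fset_of A)) (Formula A B) ->
     (forall t, t \in B -> theory_closure Sigma (fset_of A) t).
  move=> H t Ht; have := H 0 _ t Ht; rewrite shift0; apply.
  move=> s Hs; rewrite shift0 => N _ HN; exact: HN.
have h31 : (forall t, t \in B -> theory_closure Sigma (fset_of A) t) -> entails Sigma (Formula A B).
  move=> H M HM i HA t Ht.
  move: (H t Ht (fun u => M (shift i u)) (@shift_model Y Sigma M i HM)) => /= X; exact: X.
split; split=> H. exact: h12. exact: h31 (h23 H). exact: h23. exact: h12 (h31 H).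
Qed.
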